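(* Let $V\subset Z^n$ be finite, $G$ an Abelian group of order $|V|$, and $\phi:Z^n\to G$ a homomorphism whose restriction to $V$ is a bijection, and let $\mathcal{T}=\{V+l;\ l\in\ker\phi\}$ be the corresponding lattice tiling of $Z^n$. Then $\mathcal{T}$ is $p$-periodic, where $p=\mathrm{lcm}\{\mathrm{ord}(\phi(e_1)),\dots,\mathrm{ord}(\phi(e_n))\}$ and $\mathrm{ord}(g)$ is the order of $g$ in $G$.
   Context: $e_i$ is the $i$-th unit vector of $Z^n$. A set $\mathcal{S}\subset Z^n$ is $p$-periodic ($p>0$) if $s\in\mathcal{S}\iff s+pe_i\in\mathcal{S}$ for all $i=1,\dots,n$, and $p$ is the smallest positive number with this property. A tiling $\{V+l;\ l\in\mathcal{L}\}$ is $p$-periodic if $\mathcal{L}$ is $p$-periodic. *)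

(* Defs.v *)
From HB Require Import structures.
From mathcomp Require Import all_boot all_order all_algebra all_fingroup.
From mathcomp Require Import finmap.
Set Implicit Arguments. Unset Strict Implicit. Unset Printing Implicit Defensive.
Import GRing.Theory.
Local Open Scope ring_scope.

Definition unitv (n : nat) (i : 'I_n) : 'rV[int]_n := delta_mx 0 i.

Definition is_period (n : nat) (S : 'rV[int]_n -> Prop) (q : nat) : Prop :=
  forall (s : 'rV[int]_n) (i : 'I_n), S s <-> S (s + unitv i *+ q).

Definition p_periodic (n : nat) (S : 'rV[int]_n -> Prop) (p : nat) : Prop :=
  (0 < p)%N /\ is_period S p /\
  (forall q : nat, (0 < q)%N -> is_period S q -> (p <= q)%N).

(* A tiling {V + l ; l \in L} is p-periodic iff L is p-periodic. *)
Definition tiling_p_periodic (n : nat) (V : {fset 'rV[int]_n})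
  (L : 'rV[int]_n -> Prop) (p : nat) : Prop := p_periodic L p.

(* Main.v *)
Require Import Defs.
From HB Require Import structures.
From mathcomp Require Import all_boot all_order all_algebra all_fingroup.
From mathcomp Require Import finmap.
From mathcomp Require Import cyclic.
Import GRing.Theory.
Local Open Scope ring_scope.
Local Open Scope fset_scope.

Theorem corollary1 (n : nat) (V : {fset 'rV[int]_n}) (gT : finGroupType)
  (Gab : abelian [set: gT]) (Gord : #|gT| = #|` V|%N)
  (phi : 'rV[int]_n -> gT)
  (phi_hom : forall x y : 'rV[int]_n, phi (x + y)%R = (phi x * phi y)%g)
  (phi_inj : {in V &, injective phi})
  (phi_surj : forall g : gT, exists2 v, v \in V & phi v = g) :
  tiling_p_periodic V (fun l => phi l = 1%g)
    (\big[lcmn/1%N]_(i < n) #[phi (unitv i)]%g).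
Proof.
have phi0 : phi 0 = 1%g.
  have := phi_hom 0 0; rewrite addr0 => H.
  by apply: (mulgI (phi 0)); rewrite mulg1 -H.
have phiX : forall x q, phi (x *+ q) = (phi x ^+ q)%g.
  move=> x; elim=> [|q IH]; first by rewrite mulr0n expg0.
  by rewrite mulrS phi_hom IH expgS.
have perP : forall q, is_period (fun l => phi l = 1%g) q <->
    (forall i, (phi (unitv i) ^+ q = 1)%g).
  move=> q; split.
    move=> H i; have := (H 0 i).1 phi0.
    by rewrite add0r phiX.
  move=> H s i; rewrite phi_hom phiX H mulg1; by [].
split; last split.
{ apply: (big_ind (fun x => 0 < x)%N) => //.
    by move=> x y Hx Hy; rewrite lcmn_gt0 Hx Hy. }
{ apply/perP => i; apply/eqP; rewrite -order_dvdn.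
  by apply: (biglcmn_sup i). }
move=> q q0 /perP H; apply: dvdn_leq => //.
apply/dvdn_biglcmP => i _; rewrite order_dvdn; exact/eqP/H.
Qed.
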